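(* Let $X,Y$ be real Hilbert spaces and $a:X\times Y\to\mathbb{R}\cup\{+\infty\}$ such that for every $y\in Y$ the function $a(\cdot,y)$ is proper and $\Phi_{lsc}$-convex on $X$, and for every $x\in X$ the function $a(x,\cdot)$ is concave on $Y$. If $\sup_{y\in Y}\inf_{x\in X}a(x,y)=\inf_{x\in X}\sup_{y\in Y}a(x,y)$, then for every $\alpha<\inf_{x\in X}\sup_{y\in Y}a(x,y)$ there exist $y_1,y_2\in Y$ such that for every $\varepsilon>0$ there exist $x_1\in\mathrm{dom}\,a(\cdot,y_1)$ and $x_2\in\mathrm{dom}\,a(\cdot,y_2)$ for which $a(\cdot,y_1)$ and $a(\cdot,y_2)$ satisfy $ZS(\varepsilon,x_1,x_2)$.
   Context: $\Phi_{lsc}$ is the class of functions $\varphi(x)=-a\|x\|^2+\langle v,x\rangle+c$ ($a\ge0$, $v\in X^*$, $c\in\mathbb{R}$); $\mathrm{supp}(f)=\{\varphi\in\Phi_{lsc}:\varphi\le f\}$; $f$ is $\Phi_{lsc}$-convex if $f=\sup\mathrm{supp}(f)$ pointwise; proper means $\mathrm{supp}(f)\ne\emptyset$ and $\mathrm{dom}(f)\ne\emptyset$. For $\varepsilon\ge0$, $\partial^\varepsilon_{lsc}f(\bar x)$ is the set of $(a,v)\in\mathbb{R}_+\times X^*$ with $f(x)-f(\bar x)\ge\langle v,x-\bar x\rangle-a\|x\|^2+a\|\bar x\|^2-\varepsilon$ for all $x\in X$. Functions $f,g$ satisfy $ZS(\varepsilon,x_1,x_2)$ if $0=(0,0)\in\mathrm{co}(\partial^\varepsilon_{lsc}f(x_1)\cup\partial^\varepsilon_{lsc}g(x_2))$,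 convex hull in $\mathbb{R}\times X^*$. *)

(* Defs.v *)
From Stdlib Require Import Reals Lra List.
Import ListNotations.
Open Scope R_scope.

Record HilbertSpace := {
  hcar :> Type;
  hzero : hcar;
  hadd : hcar -> hcar -> hcar;
  hopp : hcar -> hcar;
  hscal : R -> hcar -> hcar;
  hinner : hcar -> hcar -> R;
  hadd_assoc : forall x y z, hadd x (hadd y z) = hadd (hadd x y) z;
  hadd_comm : forall x y, hadd x y = hadd y x;
  hadd_zero : forall x, hadd x hzero = x;
  hadd_opp : forall x, hadd x (hopp x) = hzero;
  hscal_one : forall x, hscal 1 x = x;
  hscal_assoc : forall a b x, hscal a (hscal b x) = hscal (a * b) x;
  hscal_distr_l : forall a x y, hscal a (hadd x y) = hadd (hscal a x) (hscal a y);
  hscal_distr_r : forall a b x, hscal (a + b) x = hadd (hscal a x) (hscal b x);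
  hinner_sym : forall x y, hinner x y = hinner y x;
  hinner_add_l : forall x y z, hinner (hadd x y) z = hinner x z + hinner y z;
  hinner_scal_l : forall a x y, hinner (hscal a x) y = a * hinner x y;
  hinner_pos : forall x, 0 <= hinner x x;
  hinner_def : forall x, hinner x x = 0 -> x = hzero;
  hcomplete : forall u : nat -> hcar,
    (forall eps, 0 < eps -> exists N, forall m n, (N <= m)%nat -> (N <= n)%nat ->
        sqrt (hinner (hadd (u m) (hopp (u n))) (hadd (u m) (hopp (u n)))) < eps) ->
    exists l, forall eps, 0 < eps -> exists N, forall n, (N <= n)%nat ->
        sqrt (hinner (hadd (u n) (hopp l)) (hadd (u n) (hopp l))) < eps
}.

Arguments hzero {h}.
Arguments hadd {h}.
Arguments hopp {h}.
Arguments hscal {h}.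
Arguments hinner {h}.

Definition hsub {X : HilbertSpace} (x y : X) : X := hadd x (hopp y).
Definition hnorm {X : HilbertSpace} (x : X) : R := sqrt (hinner x x).

Definition in_dual {X : HilbertSpace} (v : X -> R) : Prop :=
  (forall x y, v (hadd x y) = v x + v y) /\
  (forall a x, v (hscal a x) = a * v x) /\
  (exists M, forall x, Rabs (v x) <= M * hnorm x).

Inductive Rbar := Fin (r : R) | PInf | MInf.

Definition Rbar_le (x y : Rbar) : Prop :=
  match x, y with
  | MInf, _ => True
  | _, PInf => True
  | Fin a, Fin b => a <= b
  | _, _ => False
  end.

Definition Rbar_lt (x y : Rbar) : Prop := Rbar_le x y /\ x <> y.

Definition is_sup (S : Rbar -> Prop) (s : Rbar) : Prop :=
  (forall x, S x -> Rbar_le x s) /\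
  (forall u, (forall x, S x -> Rbar_le x u) -> Rbar_le s u).

Definition is_inf (S : Rbar -> Prop) (s : Rbar) : Prop :=
  (forall x, S x -> Rbar_le s x) /\
  (forall u, (forall x, S x -> Rbar_le u x) -> Rbar_le u s).

Definition phi_lsc {X : HilbertSpace} (a : R) (v : X -> R) (c : R) (x : X) : R :=
  - a * (hnorm x) ^ 2 + v x + c.

Definition in_Phi_lsc {X : HilbertSpace} (phi : X -> R) : Prop :=
  exists a v c, 0 <= a /\ in_dual v /\ forall x, phi x = phi_lsc a v c x.

Definition in_supp {X : HilbertSpace} (f : X -> Rbar) (phi : X -> R) : Prop :=
  in_Phi_lsc phi /\ forall x, Rbar_le (Fin (phi x)) (f x).

Definition Phi_lsc_convex {X : HilbertSpace} (f : X -> Rbar) : Prop :=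
  forall x, is_sup (fun t => exists phi, in_supp f phi /\ t = Fin (phi x)) (f x).

Definition in_dom {X : HilbertSpace} (f : X -> Rbar) (x : X) : Prop :=
  exists r, f x = Fin r.

Definition proper {X : HilbertSpace} (f : X -> Rbar) : Prop :=
  (exists phi, in_supp f phi) /\ (exists x, in_dom f x).

(** Concavity of g : Y -> R u {+oo}: its hypograph is convex. *)
Definition concave {Y : HilbertSpace} (g : Y -> Rbar) : Prop :=
  forall (y1 y2 : Y) (t1 t2 lam : R), 0 <= lam <= 1 ->
    Rbar_le (Fin t1) (g y1) -> Rbar_le (Fin t2) (g y2) ->
    Rbar_le (Fin (lam * t1 + (1 - lam) * t2))
            (g (hadd (hscal lam y1) (hscal (1 - lam) y2))).

(** epsilon-subdifferential: (a,v) in R_+ x X^* with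
    f(x) - f(xb) >= <v,x-xb> - a||x||^2 + a||xb||^2 - eps  for all x.
    (Defined only at points xb of the domain; empty otherwise.) *)
Definition in_eps_subdiff {X : HilbertSpace} (eps : R) (f : X -> Rbar) (xb : X)
    (p : R * (X -> R)) : Prop :=
  let (a, v) := p in
  0 <= a /\ in_dual v /\
  exists fxb, f xb = Fin fxb /\
    forall x, Rbar_le
      (Fin (fxb + v (hsub x xb) - a * (hnorm x) ^ 2 + a * (hnorm xb) ^ 2 - eps))
      (f x).

(** Convex hull in R x X^*: finite convex combinations. [in_co S p] *)
Definition in_co {X : HilbertSpace} (S : R * (X -> R) -> Prop) (p : R * (X -> R)) : Prop :=
  exists l : list (R * (R * (X -> R))),
    (forall w q, In (w, q) l -> 0 <= w /\ S q) /\
    fold_right (fun wq acc => fst wq + acc) 0 l = 1 /\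
    fold_right (fun wq acc => fst wq * fst (snd wq) + acc) 0 l = fst p /\
    (forall x, fold_right (fun wq acc => fst wq * snd (snd wq) x + acc) 0 l = snd p x).

Definition ZS {X : HilbertSpace} (f g : X -> Rbar) (eps : R) (x1 x2 : X) : Prop :=
  in_co (fun p => in_eps_subdiff eps f x1 p \/ in_eps_subdiff eps g x2 p)
        (0, fun _ => 0).

(* Main.v *)
Require Import Defs.
From Stdlib Require Import Reals Lra List Classical.
Import ListNotations.
Open Scope R_scope.

Lemma Rbar_le_antisym x y : Rbar_le x y -> Rbar_le y x -> x = y.
Proof.
  destruct x, y; simpl; intros; try tauto; try reflexivity.
  f_equal; lra.
Qed.

Theorem mainTheorem15 (X Y : HilbertSpace) (a : X -> Y -> Rbar)
  (Ha_ninf : forall x y, a x y <> MInf)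
  (Ha_proper : forall y, proper (fun x => a x y))
  (Ha_conv : forall y, Phi_lsc_convex (fun x => a x y))
  (Ha_conc : forall x, concave (fun y => a x y))
  (Hminimax : exists s : Rbar,
      is_sup (fun t => exists y, is_inf (fun u => exists x, u = a x y) t) s /\
      is_inf (fun t => exists x, is_sup (fun u => exists y, u = a x y) t) s) :
  forall (alpha : R) (m : Rbar),
    is_inf (fun t => exists x, is_sup (fun u => exists y, u = a x y) t) m ->
    Rbar_lt (Fin alpha) m ->
    exists y1 y2 : Y, forall eps, 0 < eps ->
      exists x1 x2 : X, in_dom (fun x => a x y1) x1 /\ in_dom (fun x => a x y2) x2 /\
        ZS (fun x => a x y1) (fun x => a x y2) eps x1 x2.
Proof.
  intros alpha m Hm Hlt.
  destruct Hminimax as [s [Hs1 Hs2]].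
  assert (Hsm : s = m).
  { apply Rbar_le_antisym.
    - apply (proj2 Hm). apply (proj1 Hs2).
    - apply (proj2 Hs2). apply (proj1 Hm). }
  subst m.
  assert (Hex : exists t, (exists y, is_inf (fun u => exists x, u = a x y) t)
                          /\ ~ Rbar_le t (Fin alpha)).
  { apply NNPP; intro Hn.
    assert (Hub : Rbar_le s (Fin alpha)).
    { apply (proj2 Hs1). intros t Ht. apply NNPP; intro Hc. apply Hn. eauto. }
    destruct Hlt as [Hl Hne]. apply Hne. apply Rbar_le_antisym; auto. }
  destruct Hex as [t [[y Hy] Hta]].
  destruct (Ha_proper y) as [_ [x0 [r Hr]]].
  assert (Hfin : exists r0, t = Fin r0).
  { destruct t as [r0| |].
    - eauto.
    - exfalso. pose proof (proj1 Hy (a x0 y) (ex_intro _ x0 eq_refl)) as H.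
      simpl in H. rewrite Hr in H. exact H.
    - exfalso. apply Hta. exact I. }
  destruct Hfin as [r0 ->].
  exists y, y. intros eps Heps.
  assert (Hx1 : exists x1 r1, a x1 y = Fin r1 /\ r1 < r0 + eps).
  { apply NNPP; intro Hn.
    assert (Hlb : Rbar_le (Fin (r0 + eps)) (Fin r0)).
    { apply (proj2 Hy). intros u [x ->].
      destruct (a x y) as [r1| |] eqn:E; simpl; auto.
      - destruct (Rle_dec (r0 + eps) r1); auto.
        exfalso; apply Hn; exists x, r1; split; auto; lra.
      - exact (Ha_ninf x y E). }
    simpl in Hlb. lra. }
  destruct Hx1 as [x1 [r1 [Hr1 Hlt1]]].
  exists x1, x1. split; [exists r1; exact Hr1|]. split; [exists r1; exact Hr1|].
  unfold ZS, in_co.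
  exists [(1, (0, fun _ : X => 0))].
  split; [|split; [simpl; lra|split; [simpl; lra| intros; simpl; lra]]].
  intros w q Hin. simpl in Hin. destruct Hin as [Heq|[]].
  inversion Heq; subst. split; [lra|]. left.
  simpl. split; [lra|]. split.
  - split; [intros; lra|]. split; [intros; lra|]. exists 0. intros.
    rewrite Rabs_R0. lra.
  - exists r1. split; auto. intro x.
    pose proof (proj1 Hy (a x y) (ex_intro _ x eq_refl)) as H.
    destruct (a x y) as [r2| |]; simpl in *; auto; lra.
Qed.
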